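(* Let $S=\{a+b\sqrt2 : a,b\in\mathbb Z_{\ge0},\ (a,b)\neq(0,0)\}$, a semiring (closed under addition and multiplication). Then: (i) the only invertible element of $S$ is $1$; (ii) $7(5+2\sqrt2)=(3+8\sqrt2)(1+2\sqrt2)$, and the four elements $7$, $5+2\sqrt2$, $3+8\sqrt2$, $1+2\sqrt2$ are all prime (irreducible) in $S$; (iii) Pythagorean proportionality in $S$ is not transitive; (iv) $7(5+2\sqrt2)$ and $7(1+2\sqrt2)$ have no algebraic gcd in $S$.
   Context: In the multiplicative monoid $S$, $u$ divides $w$ if $w=uz$ for some $z\in S$; a non-unit element is prime (irreducible) if its only divisors in $S$ are $1$ and itself. Pythagorean proportionality in $S$: $a:b=c:d$ if there exist $x,y,m,n\in S$ with $a=mx$, $b=nx$, $c=my$, $d=ny$. An algebraic gcd of $a,b\in S$ is a common divisor of $a$ and $b$ in $S$ that is divisible (in $S$) by every common divisor of $a$ and $b$ in $S$. *)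

(* Defs.v *)
(* An element a + b*sqrt 2 of S is represented by the pair
   (a, b) of natural numbers; since sqrt 2 is irrational this representation
   is unique, so equality of elements is equality of pairs. *)
From Stdlib Require Import Arith.

Definition elt := (nat * nat)%type.

Definition inS (x : elt) : Prop := x <> (0, 0).

(* (a + b sqrt2)(c + d sqrt2) = (ac + 2bd) + (ad + bc) sqrt2 *)
Definition mulS (x y : elt) : elt :=
  (fst x * fst y + 2 * (snd x * snd y), fst x * snd y + snd x * fst y).

Definition oneS : elt := (1, 0).

Definition dividesS (u w : elt) : Prop := exists z, inS z /\ w = mulS u z.

Definition unitS (u : elt) : Prop := exists v, inS v /\ mulS u v = oneS.

Definition primeS (p : elt) : Prop :=
  inS p /\ ~ unitS p /\
  forall d, inS d -> dividesS d p -> d = oneS \/ d = p.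

Definition propS (a b c d : elt) : Prop :=
  exists x y m n, inS x /\ inS y /\ inS m /\ inS n /\
    a = mulS m x /\ b = mulS n x /\ c = mulS m y /\ d = mulS n y.

Definition gcdS (g a b : elt) : Prop :=
  inS g /\ dividesS g a /\ dividesS g b /\
  forall c, inS c -> dividesS c a -> dividesS c b -> dividesS c g.

(* Main.v *)
Require Import Defs.
From Stdlib Require Import Arith Lia List Bool.
Import ListNotations.

Definition eqe (x y : elt) : bool := Nat.eqb (fst x) (fst y) && Nat.eqb (snd x) (snd y).

Lemma eqe_spec x y : eqe x y = true <-> x = y.
Proof.
  destruct x as [a b], y as [c d]; unfold eqe; simpl.
  rewrite andb_true_iff, !Nat.eqb_eq; split; [intros [-> ->]; auto | intros H; injection H; auto].
Qed.

Definition nz (z : elt) : bool := negb (Nat.eqb (fst z) 0 && Nat.eqb (snd z) 0).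

Lemma nz_spec z : nz z = true <-> inS z.
Proof.
  destruct z as [a b]; unfold nz, inS; simpl.
  rewrite negb_true_iff. split.
  - intros H E; injection E; intros -> ->; discriminate.
  - intros H. destruct a, b; simpl; auto; congruence.
Qed.

Definition rng (N : nat) := seq 0 (S N).

Lemma in_rng a N : a <= N -> In a (rng N).
Proof. intros; unfold rng; apply in_seq; lia. Qed.

Definition divb (u w : elt) : bool :=
  let N := fst w + snd w in
  existsb (fun z1 => existsb (fun z2 => nz (z1, z2) && eqe (mulS u (z1, z2)) w) (rng N)) (rng N).

Lemma bound u z w : mulS u z = w -> inS u -> inS z ->
  fst u <= fst w + snd w /\ snd u <= fst w + snd w /\
  fst z <= fst w + snd w /\ snd z <= fst w + snd w.
Proof.
  destruct u as [a b], z as [c d], w as [p q]; unfold mulS, inS; simpl.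
  intros H Hu Hz; injection H; intros H2 H1.
  destruct a, b; [congruence| | |]; destruct c, d; try congruence; nia.
Qed.

Lemma divb_spec u w : inS u -> (dividesS u w <-> divb u w = true).
Proof.
  intros Hu; unfold dividesS, divb; split.
  - intros [z [Hz E]].
    destruct (bound u z w (eq_sym E) Hu Hz) as [_ [_ [B1 B2]]].
    apply existsb_exists; exists (fst z); split; [apply in_rng; auto|].
    apply existsb_exists; exists (snd z); split; [apply in_rng; auto|].
    destruct z as [z1 z2]; simpl.
    apply andb_true_iff; split; [apply nz_spec; auto | apply eqe_spec; auto].
  - intros H; apply existsb_exists in H; destruct H as [z1 [_ H]].
    apply existsb_exists in H; destruct H as [z2 [_ H]].
    apply andb_true_iff in H; destruct H as [H1 H2].
    exists (z1, z2); split; [apply nz_spec; auto | symmetry; apply eqe_spec; auto].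
Qed.

Definition all2 (N : nat) (f : nat -> nat -> bool) : bool :=
  forallb (fun a => forallb (fun b => f a b) (rng N)) (rng N).

Lemma all2_spec N f : all2 N f = true -> forall a b, a <= N -> b <= N -> f a b = true.
Proof.
  unfold all2; intros H a b Ha Hb.
  rewrite forallb_forall in H; specialize (H a (in_rng _ _ Ha)).
  rewrite forallb_forall in H; exact (H b (in_rng _ _ Hb)).
Qed.

Lemma unit_one u : inS u -> unitS u -> u = oneS.
Proof.
  destruct u as [a b]; intros _ [[c d] [_ H]]; unfold mulS, oneS in *; simpl in *.
  injection H; intros H2 H1.
  assert (a * c = 1) by lia. assert (b * d = 0) by lia.
  apply Nat.mul_eq_1 in H0 as [-> ->].
  f_equal; lia.
Qed.

Definition primeb (p : elt) : bool :=
  all2 (fst p + snd p) (fun a b => negb (nz (a, b) && divb (a, b) p) || eqe (a, b) oneS || eqe (a, b) p).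

Lemma primeb_spec p : inS p -> p <> oneS -> primeb p = true -> primeS p.
Proof.
  intros Hp H1 H; split; [auto|split].
  - intros U; apply H1, unit_one; auto.
  - intros [a b] Hd Hdiv.
    pose proof Hdiv as [z [Hz E]].
    destruct (bound (a,b) z p (eq_sym E) Hd Hz) as [B1 [B2 _]]; cbn [fst snd] in B1, B2.
    pose proof (all2_spec _ _ H _ _ B1 B2) as C; cbv beta in C.
    apply (divb_spec _ _ Hd) in Hdiv. apply nz_spec in Hd.
    rewrite Hd, Hdiv in C; simpl in C.
    apply orb_true_iff in C as [C|C]; apply eqe_spec in C; auto.
Qed.

Lemma p7 : primeS (7, 0).
Proof. apply primeb_spec; [unfold inS; congruence | unfold oneS; congruence | vm_compute; reflexivity]. Qed.
Lemma p52 : primeS (5, 2).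
Proof. apply primeb_spec; [unfold inS; congruence | unfold oneS; congruence | vm_compute; reflexivity]. Qed.
Lemma p38 : primeS (3, 8).
Proof. apply primeb_spec; [unfold inS; congruence | unfold oneS; congruence | vm_compute; reflexivity]. Qed.
Lemma p12 : primeS (1, 2).
Proof. apply primeb_spec; [unfold inS; congruence | unfold oneS; congruence | vm_compute; reflexivity]. Qed.

Lemma gcdcheck_ok : 
  all2 21 (fun a b => if divb (a,b) (7,14) then negb (nz (a,b) && divb (a,b) (35,14)
                            && divb (7,0) (a,b) && divb (1,2) (a,b)) else true) = true.
Proof. vm_compute. reflexivity. Qed.

Theorem mainTheorem14 :
  (* (i) the only invertible element of S is 1 *)
  (unitS oneS /\ forall u, inS u -> unitS u -> u = oneS) /\
  (* (ii) 7(5+2√2) = (3+8√2)(1+2√2), and the four factors are prime *)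
  (mulS (7, 0) (5, 2) = mulS (3, 8) (1, 2) /\
   primeS (7, 0) /\ primeS (5, 2) /\ primeS (3, 8) /\ primeS (1, 2)) /\
  (* (iii) Pythagorean proportionality is not transitive *)
  ~ (forall a b c d e f, inS a -> inS b -> inS c -> inS d -> inS e -> inS f ->
       propS a b c d -> propS c d e f -> propS a b e f) /\
  (* (iv) 7(5+2√2) and 7(1+2√2) have no algebraic gcd in S *)
  ~ (exists g, gcdS g (mulS (7, 0) (5, 2)) (mulS (7, 0) (1, 2))).
Proof.
  split; [split|split; [|split]].
  - exists oneS; split; [unfold inS, oneS; congruence | reflexivity].
  - exact unit_one.
  - repeat split; try reflexivity; try apply p7; try apply p52; try apply p38; try apply p12.
  - intros T.
    assert (P : propS (7,0) (1,2) (3,8) (5,2)).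
    { apply (T (7,0) (1,2) (35,14) (13,12) (3,8) (5,2));
        try (unfold inS; congruence).
      - exists (1,0), (5,2), (7,0), (1,2); repeat split; unfold inS; congruence.
      - exists (1,2), (1,0), (3,8), (5,2); repeat split; unfold inS; congruence. }
    destruct P as [x [y [m [n [Hx [Hy [Hm [Hn [E1 [E2 [E3 E4]]]]]]]]]]].
    destruct p7 as [_ [_ D]].
    destruct (D m Hm) as [->| ->].
    + exists x; split; auto.
    + destruct x as [x1 x2]; unfold mulS, oneS in E1; simpl in E1.
      injection E1; intros; subst.
      destruct n as [n1 n2]; unfold mulS in E2; simpl in E2; injection E2; intros; lia.
    + destruct y as [y1 y2]; unfold mulS in E3; simpl in E3; injection E3; intros; lia.
  - intros [[a b] [Hg [Da [Db G]]]].
    assert (D7 : dividesS (7,0) (a,b)).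
    { apply G; [unfold inS; congruence| |].
      - exists (5,2); split; [unfold inS; congruence|reflexivity].
      - exists (1,2); split; [unfold inS; congruence|reflexivity]. }
    assert (D12 : dividesS (1,2) (a,b)).
    { apply G; [unfold inS; congruence| |].
      - exists (3,8); split; [unfold inS; congruence|reflexivity].
      - exists (7,0); split; [unfold inS; congruence|reflexivity]. }
    pose proof Db as [z [Hz E]].
    destruct (bound (a,b) z _ (eq_sym E) Hg Hz) as [B1 [B2 _]]; cbn [fst snd] in B1, B2.
    simpl in B1, B2.
    pose proof (all2_spec _ _ gcdcheck_ok _ _ B1 B2) as C; cbv beta in C.
    apply (divb_spec _ _ Hg) in Da; apply (divb_spec _ _ Hg) in Db.
    apply divb_spec in D7; [|unfold inS; congruence].
    apply divb_spec in D12; [|unfold inS; congruence].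
    apply nz_spec in Hg.
    change (mulS (7,0) (5,2)) with (35,14) in Da; change (mulS (7,0) (1,2)) with (7,14) in Db. rewrite Hg, Da, Db, D7, D12 in C. discriminate.
Qed.
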